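(* Let $V$ be a vertex algebra and $W_1,W_2$ $V$-modules with $g(V)_{\ge0}W_1=W_1$. Then every $g(V)_{\ge0}$-homomorphism $f:W_1\to W_2$ (a linear map with $f(v_nw)=v_nf(w)$ for all $v\in V$, $n\ge0$, $w\in W_1$) is a $V$-homomorphism, i.e. $f(v_nw)=v_nf(w)$ for all $n\in\mathbb Z$.
   Context: $(V,Y,\mathbf 1)$ is a vertex algebra; $V$-modules are modules for the vertex algebra (no grading assumed), with $Y_W(v,x)=\sum_nv_nx^{-n-1}$. $g(V)_{\ge0}W_1=\mathrm{span}\{v_nw\mid v\in V,\ n\ge0,\ w\in W_1\}$. *)

(* Defs.v *)
From HB Require Import structures.
From mathcomp Require Import all_boot all_order all_algebra.
Set Implicit Arguments. Unset Strict Implicit. Unset Printing Implicit Defensive.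
Import Order.TTheory GRing.Theory Num.Theory.
Local Open Scope ring_scope.

(* Generalized binomial coefficient binom(l, i) for l : int, i : nat,
   as an integer:  binom(k, i) = 'C(k, i) for k >= 0, and
   binom(-(k+1), i) = (-1)^i 'C(k+i, i). *)
Definition binz (l : int) (i : nat) : int :=
  match l with
  | Posz k => ('C(k, i))%:Z
  | Negz k => (-1) ^+ i * ('C(k + i, i))%:Z
  end.

Section VA.
Variable K : fieldType.

(* Bilinearity of a vertex operator  (u, w) |-> Y(u, x) w = sum_n u_n w x^{-n-1}. *)
Definition bilinear_op (V W : lmodType K) (Y : V -> W -> int -> W) : Prop :=
  (forall (a : K) u u' w n, Y (a *: u + u') w n = a *: Y u w n + Y u' w n) /\
  (forall (a : K) u w w' n, Y u (a *: w + w') n = a *: Y u w n + Y u w' n).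

Definition truncation (V W : lmodType K) (Y : V -> W -> int -> W) : Prop :=
  forall u w, exists N : int, forall n : int, N <= n -> Y u w n = 0.

(* Jacobi identity in component form (Borcherds identity): for all l m n : int,
   sum_{i>=0} binom(m,i) (u_{l+i} v)_{m+n-i} w
   = sum_{i>=0} (-1)^i binom(l,i) (u_{l+m-i} v_{n+i} w - (-1)^l v_{l+n-i} u_{m+i} w).
   The sums are finite by truncation; we state it with the sums cut at any N
   beyond which all the summands vanish. *)
Definition borcherds (V W : lmodType K) (Y : V -> V -> int -> V)
    (YW : V -> W -> int -> W) : Prop :=
  forall (u v : V) (w : W) (l m n : int) (N : nat),
    (forall i : nat, (N <= i)%N ->
       [/\ Y u v (l + i%:Z) = 0, YW u w (m + i%:Z) = 0 & YW v w (n + i%:Z) = 0]) ->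
    \sum_(i < N) (YW (Y u v (l + i%:Z)) w (m + n - i%:Z)) *~ binz m i =
    \sum_(i < N)
       (YW u (YW v w (n + i%:Z)) (l + m - i%:Z)
        - (YW v (YW u w (m + i%:Z)) (l + n - i%:Z)) *~ ((-1) ^+ absz l))
         *~ ((-1) ^+ i * binz l i).

Definition is_vertex_algebra (V : lmodType K) (Y : V -> V -> int -> V) (vac : V) : Prop :=
  [/\ bilinear_op Y,
      truncation Y,
      (forall v n, Y vac v n = if n == -1 then v else 0),
      (forall u, Y u vac (-1) = u /\ forall n : nat, Y u vac n%:Z = 0)
    & borcherds Y Y].

Definition is_module (V : lmodType K) (Y : V -> V -> int -> V) (vac : V)
    (W : lmodType K) (YW : V -> W -> int -> W) : Prop :=
  [/\ bilinear_op YW,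
      truncation YW,
      (forall w n, YW vac w n = if n == -1 then w else 0)
    & borcherds Y YW].

Definition in_span (W : lmodType K) (P : W -> Prop) (w : W) : Prop :=
  exists s : seq (K * W), (forall t, t \in s -> P t.2) /\
    w = \sum_(t <- s) t.1 *: t.2.

(* Generators of g(V)_{>=0} W :  v_n w  with v in V, n >= 0, w in W. *)
Definition gen_nonneg (V W : lmodType K) (YW : V -> W -> int -> W) (x : W) : Prop :=
  exists (v : V) (n : nat) (w : W), x = YW v w n%:Z.

Definition is_K_linear (W1 W2 : lmodType K) (f : W1 -> W2) : Prop :=
  forall (a : K) x y, f (a *: x + y) = a *: f x + f y.

End VA.

(* Main.v *)
Require Import Defs.
From HB Require Import structures.
From mathcomp Require Import all_boot all_order all_algebra.
From mathcomp Require Import zify.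
Import Order.TTheory GRing.Theory Num.Theory.
Local Open Scope ring_scope.

Lemma lin0 {K : fieldType} {W1 W2 : lmodType K} {f : W1 -> W2} :
  is_K_linear f -> f 0 = 0.
Proof.
move=> H; have E := H 1 0 0; rewrite !scale1r !addr0 in E.
by apply: (addrI (f 0)); rewrite addr0 -E.
Qed.

Lemma linD {K : fieldType} {W1 W2 : lmodType K} {f : W1 -> W2} :
  is_K_linear f -> forall x y, f (x + y) = f x + f y.
Proof. by move=> H x y; have := H 1 x y; rewrite !scale1r. Qed.

Lemma linZ {K : fieldType} {W1 W2 : lmodType K} {f : W1 -> W2} :
  is_K_linear f -> forall c x, f (c *: x) = c *: f x.
Proof. by move=> H c x; have := H c x 0; rewrite !addr0 (lin0 H) addr0. Qed.

Lemma linMz {K : fieldType} {W1 W2 : lmodType K} {f : W1 -> W2} :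
  is_K_linear f -> forall x z, f (x *~ z) = f x *~ z.
Proof. by move=> H x z; rewrite -!scaler_int (linZ H). Qed.

Lemma linsum {K : fieldType} {W1 W2 : lmodType K} {f : W1 -> W2} :
  is_K_linear f -> forall N (F : 'I_N -> W1),
  f (\sum_(i < N) F i) = \sum_(i < N) f (F i).
Proof. by move=> H N F; apply: (big_morph f (linD H) (lin0 H)). Qed.

Lemma Yu0 {K : fieldType} {V W : lmodType K} {Y : V -> W -> int -> W} :
  bilinear_op Y -> forall u n, Y u 0 n = 0.
Proof.
case=> _ H u n; have E := H 1 u 0 0 n; rewrite !scale1r !addr0 in E.
by apply: (addrI (Y u 0 n)); rewrite addr0 -E.
Qed.

Lemma key (K : fieldType) (V : lmodType K) (Y : V -> V -> int -> V) (vac : V)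
  (HV : is_vertex_algebra Y vac)
  (W1 W2 : lmodType K) (Y1 : V -> W1 -> int -> W1) (Y2 : V -> W2 -> int -> W2)
  (HW1 : is_module Y vac Y1) (HW2 : is_module Y vac Y2)
  (f : W1 -> W2) (Hlin : is_K_linear f)
  (Hf : forall (v : V) (w : W1) (n : nat), f (Y1 v w n%:Z) = Y2 v (f w) n%:Z)
  (a b : V) (w : W1) (j : nat) (k : int) :
  f (Y1 a (Y1 b w j%:Z) k) = Y2 a (Y2 b (f w) j%:Z) k.
Proof.
case: HV => _ trV _ _ _.
case: HW1 => bl1 tr1 _ bor1.
case: HW2 => bl2 tr2 _ bor2.
have [Ma1 HMa1] := tr1 a w.
have [Ma2 HMa2] := tr2 a (f w).
have [Jb1 HJb1] := tr1 b w.
have [Jb2 HJb2] := tr2 b (f w).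
pose m : nat := (absz Ma1 + absz Ma2)%N.
pose J : nat := (absz Jb1 + absz Jb2)%N.
have Hb1 : forall n : nat, (J <= n)%N -> Y1 b w n%:Z = 0.
  by move=> n Hn; apply: HJb1; rewrite /J in Hn; lia.
have Hb2 : forall n : nat, (J <= n)%N -> Y2 b (f w) n%:Z = 0.
  by move=> n Hn; apply: HJb2; rewrite /J in Hn; lia.
have Ha1 : forall i : nat, Y1 a w (m%:Z + i%:Z) = 0.
  by move=> i; apply: HMa1; rewrite /m; lia.
have Ha2 : forall i : nat, Y2 a (f w) (m%:Z + i%:Z) = 0.
  by move=> i; apply: HMa2; rewrite /m; lia.
suff H : forall d j k, (J <= j + d)%N ->
   f (Y1 a (Y1 b w j%:Z) k) = Y2 a (Y2 b (f w) j%:Z) k.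
  by apply: (H J); lia.
elim=> [|d IH] j' k' Hd.
  by rewrite Hb1 ?Hb2 ?Yu0 ?(lin0 Hlin) //; lia.
case: (leqP J j') => hJ.
  by rewrite Hb1 ?Hb2 ?Yu0 ?(lin0 Hlin) //; lia.
have [Na HNa] := trV a b.
pose l := k' - m%:Z.
pose N : nat := (absz Na + absz l + J).+1.
have hyp1 : forall i : nat, (N <= i)%N -> [/\ Y a b (l + i%:Z) = 0,
    Y1 a w (m%:Z + i%:Z) = 0 & Y1 b w (j'%:Z + i%:Z) = 0].
  move=> i Hi; split => //.
    by apply: HNa; rewrite /N in Hi; lia.
  by rewrite -PoszD; apply: Hb1; rewrite /N in Hi; lia.
have hyp2 : forall i : nat, (N <= i)%N -> [/\ Y a b (l + i%:Z) = 0,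
    Y2 a (f w) (m%:Z + i%:Z) = 0 & Y2 b (f w) (j'%:Z + i%:Z) = 0].
  move=> i Hi; split => //.
    by apply: HNa; rewrite /N in Hi; lia.
  by rewrite -PoszD; apply: Hb2; rewrite /N in Hi; lia.
have E1 := bor1 a b w l m%:Z j'%:Z N hyp1.
have E2 := bor2 a b (f w) l m%:Z j'%:Z N hyp2.
have F1 : f (\sum_(i < N) (Y1 (Y a b (l + i%:Z)) w (m%:Z + j'%:Z - i%:Z)) *~ binz m%:Z i)
   = \sum_(i < N) (Y2 (Y a b (l + i%:Z)) (f w) (m%:Z + j'%:Z - i%:Z)) *~ binz m%:Z i.
  rewrite (linsum Hlin); apply: eq_bigr => i _; rewrite (linMz Hlin).
  case: (leqP (nat_of_ord i) m) => him.
    have -> : m%:Z + j'%:Z - (nat_of_ord i)%:Z = (m + j' - i)%N%:Z by lia.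
    by rewrite Hf.
  by rewrite /= bin_small // !mulr0z.
rewrite E1 E2 in F1.
rewrite (eq_bigr (fun i : 'I_N => Y1 a (Y1 b w (j'%:Z + i%:Z)) (l + m%:Z - i%:Z)
   *~ ((-1) ^+ i * binz l i))) in F1; last first.
  by move=> i _; rewrite Ha1 Yu0 // mul0rz subr0.
rewrite (eq_bigr (fun i : 'I_N => Y2 a (Y2 b (f w) (j'%:Z + i%:Z)) (l + m%:Z - i%:Z)
   *~ ((-1) ^+ i * binz l i))) in F1; last first.
  by move=> i _; rewrite Ha2 Yu0 // mul0rz subr0.
rewrite (linsum Hlin) !big_ord_recl /= in F1.
rewrite (eq_bigr (fun i : 'I_(absz Na + absz l + J) =>
   Y2 a (Y2 b (f w) (j'%:Z + (lift ord0 i)%:Z)) (l + m%:Z - (lift ord0 i)%:Z)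
   *~ ((-1) ^+ (lift ord0 i) * binz l (lift ord0 i)))) in F1; last first.
  move=> i _; rewrite (linMz Hlin) -PoszD IH ?PoszD //.
  by rewrite /bump leq0n add1n; lia.
move/addIr: F1.
have -> : binz l 0 = 1 by case: (l) => [n|n] /=; rewrite ?addn0 bin0.
rewrite expr0 mul1r !mulr1z addr0 subr0 /l subrK.
by [].
Qed.

Theorem mainTheorem12 (K : fieldType) (HK : [pchar K] =i pred0)
  (V : lmodType K) (Y : V -> V -> int -> V) (vac : V)
  (HV : is_vertex_algebra Y vac)
  (W1 W2 : lmodType K) (Y1 : V -> W1 -> int -> W1) (Y2 : V -> W2 -> int -> W2)
  (HW1 : is_module Y vac Y1) (HW2 : is_module Y vac Y2)
  (Hgen : forall w : W1, in_span (gen_nonneg Y1) w)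
  (f : W1 -> W2) (Hlin : is_K_linear f)
  (Hf : forall (v : V) (w : W1) (n : nat), f (Y1 v w n%:Z) = Y2 v (f w) n%:Z) :
  forall (v : V) (w : W1) (n : int), f (Y1 v w n) = Y2 v (f w) n.
Proof.
move=> v x n.
have [s [Hs ->]] := Hgen x.
have bl1 : bilinear_op Y1 by case: HW1.
have bl2 : bilinear_op Y2 by case: HW2.
elim: s Hs => [|[c y] s IH] Hs.
  by rewrite !big_nil (Yu0 bl1) !(lin0 Hlin) (Yu0 bl2).
set S := \sum_(t <- s) t.1 *: t.2.
rewrite big_cons /= -/S.
have [_ Hr1] := bl1; have [_ Hr2] := bl2.
rewrite (Hr1 c v y S n) (linD Hlin (c *: y) S) (linD Hlin _ _) (linZ Hlin c y) (linZ Hlin c _).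
rewrite (Hr2 c v (f y) (f S) n) IH; last first.
  by move=> t ht; apply: Hs; rewrite in_cons ht orbT.
have [b [j [w ->]]] : gen_nonneg Y1 y by apply: (Hs (c, y)); rewrite in_cons eqxx.
by rewrite (@key _ _ _ _ HV _ _ _ _ HW1 HW2 _ Hlin Hf) Hf.
Qed.
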